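(* Let $u=u(x,y,z,t)$ be a smooth function with $u_x\neq 0$ satisfying \[ D_z\!\left(\frac{u_y}{u_x}\right)-D_x\!\left(\frac{u_t}{u_x}\right)=0. \qquad (\ast) \] Call a smooth function $U$ a symmetry of $(\ast)$ (at $u$) if it satisfies the linearized equation \[ \ell(U):=D_z\!\left(\frac{u_xU_y-u_yU_x}{u_x^2}\right)-D_x\!\left(\frac{u_xU_t-u_tU_x}{u_x^2}\right)=0 . \] Consider the relations, for an unknown function $\tilde U$, \[ \tilde{U}_z-\frac{u_{xz}}{u_x}\,\tilde{U}=U_t-\frac{u_t}{u_x}\,U_x,\qquad \tilde{U}_x-\frac{u_{xx}}{u_x}\,\tilde{U}=U_y-\frac{u_y}{u_x}\,U_x. \qquad (\ast\ast) \] Then these relations define a recursion operator for $(\ast)$, namely: (a) if $u$ satisfies $(\ast)$ and $U$ satisfies $\ell(U)=0$, then the system $(\ast\ast)$, regarded as an overdetermined first-order system for $\tilde U$, is compatible (its cross-differentiation compatibility condition holds identically by virtue of $(\ast)$, $\ell(U)=0$ and their differential consequences); and (b) if $u$ satisfies $(\ast)$, $U$ satisfies $\ell(U)=0$, and $\tilde U$ satisfies $(\ast\ast)$, then $\ell(\tilde U)=0$, i.e. $\tilde U$ is again a symmetry of $(\ast)$.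
   Context: Subscripts denote partial derivatives and $D_x,D_y,D_z,D_t$ denote total derivatives. The linearized equation $\ell(U)=0$ is obtained by replacing $u$ by $u+\varepsilon U$ in the left-hand side of $(\ast)$ and taking the coefficient of $\varepsilon$ (the linearization). Symmetries here may be nonlocal, i.e. $U,\tilde U$ are arbitrary smooth functions satisfying the stated equations. The equation $(\ast)$ admits the Lax pair $\psi_t=\lambda\psi_z+(u_t/u_x)\psi_x$, $\psi_y=(\lambda+u_y/u_x)\psi_x$ with spectral parameter $\lambda$. *)

(* Defs.v *)
From Stdlib Require Import Reals List ClassicalEpsilon.
Open Scope R_scope.

Definition F4 := R -> R -> R -> R -> R.

Inductive dir := dX | dY | dZ | dT.

Definition slice (d : dir) (g : F4) (x y z t : R) : R -> R :=
  match d with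
  | dX => fun s => g s y z t
  | dY => fun s => g x s z t
  | dZ => fun s => g x y s t
  | dT => fun s => g x y z s
  end.

Definition coord (d : dir) (x y z t : R) : R :=
  match d with dX => x | dY => y | dZ => z | dT => t end.

(** Derivative of a one-variable function at a point: the (unique) l with
    derivable_pt_lim g a l; an unspecified value if g is not derivable at a
    (only used where derivability is guaranteed by smoothness). *)
Definition der (g : R -> R) (a : R) : R :=
  epsilon (inhabits 0) (fun l => derivable_pt_lim g a l).

(** Since u, U are
    functions of (x,y,z,t), the total derivatives D_x,... of expressions in
    u, U and their derivatives are exactly partial derivatives of the composite
    functions. *)
Definition pd (d : dir) (g : F4) : F4 :=
  fun x y z t => der (slice d g x y z t) (coord d x y z t).

Definition iter_pd (ds : list dir) (g : F4) : F4 := fold_right pd g ds.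

Definition cont4_at (g : F4) (x y z t : R) : Prop :=
  forall eps, 0 < eps -> exists delta, 0 < delta /\
    forall x' y' z' t', Rabs (x' - x) < delta -> Rabs (y' - y) < delta ->
      Rabs (z' - z) < delta -> Rabs (t' - t) < delta ->
      Rabs (g x' y' z' t' - g x y z t) < eps.

Definition open4 (O : R -> R -> R -> R -> Prop) : Prop :=
  forall x y z t, O x y z t -> exists delta, 0 < delta /\
    forall x' y' z' t', Rabs (x' - x) < delta -> Rabs (y' - y) < delta ->
      Rabs (z' - z) < delta -> Rabs (t' - t) < delta -> O x' y' z' t'.

Definition smooth_on (O : R -> R -> R -> R -> Prop) (g : F4) : Prop :=
  forall (ds : list dir) x y z t, O x y z t ->
    (forall d, exists l,
       derivable_pt_lim (slice d (iter_pd ds g) x y z t) (coord d x y z t) l)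
    /\ cont4_at (iter_pd ds g) x y z t.

Definition eq_lhs (u : F4) : F4 :=
  fun x y z t =>
    pd dZ (fun x y z t => pd dY u x y z t / pd dX u x y z t) x y z t
  - pd dX (fun x y z t => pd dT u x y z t / pd dX u x y z t) x y z t.

Definition ell (u U : F4) : F4 :=
  fun x y z t =>
    pd dZ (fun x y z t =>
       (pd dX u x y z t * pd dY U x y z t - pd dY u x y z t * pd dX U x y z t)
       / (pd dX u x y z t ^ 2)) x y z t
  - pd dX (fun x y z t =>
       (pd dX u x y z t * pd dT U x y z t - pd dT u x y z t * pd dX U x y z t)
       / (pd dX u x y z t ^ 2)) x y z t.

Definition recA (u : F4) : F4 :=
  fun x y z t => pd dZ (pd dX u) x y z t / pd dX u x y z t.
Definition recC (u : F4) : F4 :=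
  fun x y z t => pd dX (pd dX u) x y z t / pd dX u x y z t.
Definition recB (u U : F4) : F4 :=
  fun x y z t => pd dT U x y z t - pd dT u x y z t / pd dX u x y z t * pd dX U x y z t.
Definition recE (u U : F4) : F4 :=
  fun x y z t => pd dY U x y z t - pd dY u x y z t / pd dX u x y z t * pd dX U x y z t.

(** Cross-differentiation compatibility condition of ( ** ) at a point, where
    w stands for the (arbitrary) value of Ut: computing (Ut_z)_x and (Ut_x)_z
    using ( ** ) to eliminate Ut_x and Ut_z, the two must agree identically in w. *)
Definition compat_at (u U : F4) (x y z t w : R) : Prop :=
  pd dX (recA u) x y z t * w
    + recA u x y z t * (recC u x y z t * w + recE u U x y z t)
    + pd dX (recB u U) x y z t
  = pd dZ (recC u) x y z t * w
    + recC u x y z t * (recA u x y z t * w + recB u U x y z t)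
    + pd dZ (recE u U) x y z t.

Definition rec_rel (u U Ut : F4) (x y z t : R) : Prop :=
  pd dZ Ut x y z t - recA u x y z t * Ut x y z t = recB u U x y z t /\
  pd dX Ut x y z t - recC u x y z t * Ut x y z t = recE u U x y z t.

(* Main.v *)
Require Import Defs.
From Stdlib Require Import Reals Lra List ClassicalEpsilon.
From Coquelicot Require Import Coquelicot.
Open Scope R_scope.

Lemma der_eq g a l : derivable_pt_lim g a l -> der g a = l.
Proof.
  intros H. unfold der.
  pose proof (epsilon_spec (inhabits 0) (fun l => derivable_pt_lim g a l) (ex_intro _ l H)) as H2.
  exact (uniqueness_limite _ _ _ _ H2 H).
Qed.

Lemma Der_der g a : (exists l, derivable_pt_lim g a l) -> Derive g a = der g a.
Proof.
  intros [l H]. rewrite (der_eq _ _ _ H). apply is_derive_unique. apply is_derive_Reals. exact H.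
Qed.

Lemma D_loc f g a l d : 0 < d -> (forall s, Rabs (s - a) < d -> f s = g s) ->
  derivable_pt_lim g a l -> derivable_pt_lim f a l.
Proof.
  intros hd Hfg H eps heps.
  destruct (H eps heps) as [del Hdel].
  assert (hm : 0 < Rmin del d) by (apply Rmin_pos; [apply cond_pos|lra]).
  exists (mkposreal _ hm). intros h hh hlt. simpl in hlt.
  rewrite (Hfg (a + h)), (Hfg a).
  - apply Hdel; auto. eapply Rlt_le_trans; [exact hlt| apply Rmin_l].
  - replace (a - a) with 0 by ring. rewrite Rabs_R0; lra.
  - replace (a + h - a) with h by ring. eapply Rlt_le_trans; [exact hlt| apply Rmin_r].
Qed.

Definition cont2 (F : R -> R -> R) a b := forall eps, 0 < eps -> exists del, 0 < del /\
  forall u v, Rabs (u - a) < del -> Rabs (v - b) < del -> Rabs (F u v - F a b) < eps.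

Lemma schwarz2 (f : R -> R -> R) a b dl : 0 < dl ->
 (forall u v, Rabs (u-a) < dl -> Rabs (v-b) < dl ->
   (exists l, derivable_pt_lim (fun s => f s v) u l) /\
   (exists l, derivable_pt_lim (fun s => f u s) v l) /\
   (exists l, derivable_pt_lim (fun s => der (fun r => f s r) v) u l) /\
   (exists l, derivable_pt_lim (fun s => der (fun r => f r s) u) v l)) ->
 cont2 (fun u v => der (fun s => der (fun r => f s r) v) u) a b ->
 cont2 (fun u v => der (fun s => der (fun r => f r s) u) v) a b ->
 der (fun s => der (fun r => f s r) b) a = der (fun s => der (fun r => f r s) a) b.
Proof.
  intros hdl H C1 C2.
  assert (I1 : forall s v, Rabs (s-a) < dl -> Rabs (v-b) < dl ->
     Derive (fun r => f s r) v = der (fun r => f s r) v).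
  { intros s v hs hv. apply Der_der. apply (H s v hs hv). }
  assert (I2 : forall u s, Rabs (u-a) < dl -> Rabs (s-b) < dl ->
     Derive (fun r => f r s) u = der (fun r => f r s) u).
  { intros u s hu hs. apply Der_der. apply (H u s hu hs). }
  assert (J1 : forall u v, Rabs (u-a) < dl -> Rabs (v-b) < dl -> forall l,
     derivable_pt_lim (fun s => der (fun r => f s r) v) u l ->
     derivable_pt_lim (fun s => Derive (fun r => f s r) v) u l).
  { intros u v hu hv l Hl. eapply (D_loc _ _ _ _ (dl - Rabs (u - a))); [lra| |exact Hl].
    intros s hs. apply I1; auto.
    replace (s - a) with ((s - u) + (u - a)) by ring.
    eapply Rle_lt_trans; [apply Rabs_triang|lra]. }
  assert (J2 : forall u v, Rabs (u-a) < dl -> Rabs (v-b) < dl -> forall l,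
     derivable_pt_lim (fun s => der (fun r => f r s) u) v l ->
     derivable_pt_lim (fun s => Derive (fun r => f r s) u) v l).
  { intros u v hu hv l Hl. eapply (D_loc _ _ _ _ (dl - Rabs (v - b))); [lra| |exact Hl].
    intros s hs. apply I2; auto.
    replace (s - b) with ((s - v) + (v - b)) by ring.
    eapply Rle_lt_trans; [apply Rabs_triang|lra]. }
  assert (K1 : forall u v, Rabs (u-a) < dl -> Rabs (v-b) < dl ->
     Derive (fun s => Derive (fun r => f s r) v) u = der (fun s => der (fun r => f s r) v) u).
  { intros u v hu hv. destruct (H u v hu hv) as [_ [_ [[l Hl] _]]].
    rewrite (der_eq _ _ _ Hl). apply is_derive_unique. apply is_derive_Reals. apply J1; auto. }
  assert (K2 : forall u v, Rabs (u-a) < dl -> Rabs (v-b) < dl ->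
     Derive (fun s => Derive (fun r => f r s) u) v = der (fun s => der (fun r => f r s) u) v).
  { intros u v hu hv. destruct (H u v hu hv) as [_ [_ [_ [l Hl]]]].
    rewrite (der_eq _ _ _ Hl). apply is_derive_unique. apply is_derive_Reals. apply J2; auto. }
  assert (ha : Rabs (a - a) < dl) by (replace (a - a) with 0 by ring; rewrite Rabs_R0; lra).
  assert (hb : Rabs (b - b) < dl) by (replace (b - b) with 0 by ring; rewrite Rabs_R0; lra).
  rewrite <- (K1 a b ha hb), <- (K2 a b ha hb).
  apply Schwarz.
  - exists (mkposreal _ hdl). intros u v hu hv. simpl in hu, hv.
    destruct (H u v hu hv) as [[l1 H1] [[l2 H2] [[l3 H3] [l4 H4]]]].
    repeat split.
    + exists l1. apply is_derive_Reals; exact H1.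
    + exists l2. apply is_derive_Reals; exact H2.
    + exists l3. apply is_derive_Reals. apply J1; auto.
    + exists l4. apply is_derive_Reals. apply J2; auto.
  - intros eps. destruct (C1 eps (cond_pos eps)) as [d1 [hd1 Hd1]].
    assert (hm : 0 < Rmin d1 dl) by (apply Rmin_pos; lra).
    exists (mkposreal _ hm). intros u v hu hv. simpl in hu, hv.
    assert (hu1 : Rabs (u - a) < d1) by (eapply Rlt_le_trans; [exact hu|apply Rmin_l]).
    assert (hu2 : Rabs (u - a) < dl) by (eapply Rlt_le_trans; [exact hu|apply Rmin_r]).
    assert (hv1 : Rabs (v - b) < d1) by (eapply Rlt_le_trans; [exact hv|apply Rmin_l]).
    assert (hv2 : Rabs (v - b) < dl) by (eapply Rlt_le_trans; [exact hv|apply Rmin_r]).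
    rewrite (K1 u v hu2 hv2), (K1 a b ha hb). apply Hd1; auto.
  - intros eps. destruct (C2 eps (cond_pos eps)) as [d1 [hd1 Hd1]].
    assert (hm : 0 < Rmin d1 dl) by (apply Rmin_pos; lra).
    exists (mkposreal _ hm). intros u v hu hv. simpl in hu, hv.
    assert (hu1 : Rabs (u - a) < d1) by (eapply Rlt_le_trans; [exact hu|apply Rmin_l]).
    assert (hu2 : Rabs (u - a) < dl) by (eapply Rlt_le_trans; [exact hu|apply Rmin_r]).
    assert (hv1 : Rabs (v - b) < d1) by (eapply Rlt_le_trans; [exact hv|apply Rmin_l]).
    assert (hv2 : Rabs (v - b) < dl) by (eapply Rlt_le_trans; [exact hv|apply Rmin_r]).
    rewrite (K2 u v hu2 hv2), (K2 a b ha hb). apply Hd1; auto.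
Qed.

Definition Dd d (g : F4) x y z t l := derivable_pt_lim (slice d g x y z t) (coord d x y z t) l.

Lemma pd_rw d F x y z t l : Dd d F x y z t l -> pd d F x y z t = l.
Proof. intro H. apply der_eq. exact H. Qed.

Lemma D_add d f g x y z t lf lg : Dd d f x y z t lf -> Dd d g x y z t lg ->
  Dd d (fun x y z t => f x y z t + g x y z t) x y z t (lf + lg).
Proof. unfold Dd; destruct d; simpl; intros H1 H2; exact (derivable_pt_lim_plus _ _ _ _ _ H1 H2). Qed.

Lemma D_sub d f g x y z t lf lg : Dd d f x y z t lf -> Dd d g x y z t lg ->
  Dd d (fun x y z t => f x y z t - g x y z t) x y z t (lf - lg).
Proof. unfold Dd; destruct d; simpl; intros H1 H2; exact (derivable_pt_lim_minus _ _ _ _ _ H1 H2). Qed.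

Lemma D_mul d f g x y z t lf lg : Dd d f x y z t lf -> Dd d g x y z t lg ->
  Dd d (fun x y z t => f x y z t * g x y z t) x y z t (lf * g x y z t + f x y z t * lg).
Proof. unfold Dd; destruct d; simpl; intros H1 H2; exact (derivable_pt_lim_mult _ _ _ _ _ H1 H2). Qed.

Lemma D_div d f g x y z t lf lg : Dd d f x y z t lf -> Dd d g x y z t lg -> g x y z t <> 0 ->
  Dd d (fun x y z t => f x y z t / g x y z t) x y z t
    ((lf * g x y z t - lg * f x y z t) / (g x y z t * g x y z t)).
Proof. unfold Dd; destruct d; simpl; intros H1 H2 H3; exact (derivable_pt_lim_div _ _ _ _ _ H1 H2 H3). Qed.

Lemma D_sq d f x y z t lf : Dd d f x y z t lf ->
  Dd d (fun x y z t => f x y z t ^ 2) x y z t (lf * f x y z t + f x y z t * lf).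
Proof.
  intro H. pose proof (D_mul d f f x y z t lf lf H H) as H2. revert H2.
  unfold Dd; destruct d; simpl; intro H2;
  (eapply (D_loc _ _ _ _ 1); [lra| |exact H2]); intros; simpl; ring.
Qed.

Lemma smooth_pd O g d : smooth_on O g -> smooth_on O (pd d g).
Proof.
  intros H ds x y z t HO. specialize (H (ds ++ d :: nil) x y z t HO).
  unfold iter_pd in *. rewrite fold_right_app in H. exact H.
Qed.

Lemma D_atom O g d x y z t : smooth_on O g -> O x y z t ->
  Dd d (fun x y z t => g x y z t) x y z t (pd d g x y z t).
Proof.
  intros Hs HO. destruct (proj1 (Hs nil x y z t HO) d) as [l Hl].
  unfold Dd. simpl in Hl. rewrite (pd_rw d g x y z t l Hl). exact Hl.
Qed.

Lemma pd_loc O f g d x y z t l : open4 O -> O x y z t ->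
  (forall x y z t, O x y z t -> f x y z t = g x y z t) -> Dd d g x y z t l -> pd d f x y z t = l.
Proof.
  intros Ho HO Hfg H. apply der_eq. destruct (Ho x y z t HO) as [del [hdel Hdel]].
  assert (h0 : forall a, Rabs (a - a) < del) by (intro a; replace (a - a) with 0 by ring; rewrite Rabs_R0; lra).
  unfold Dd in H. eapply (D_loc _ _ _ _ del); [lra| |exact H].
  intros s hs; destruct d; simpl in *; apply Hfg; apply Hdel; auto.
Qed.

Lemma pd_congr O f g d x y z t : open4 O -> O x y z t -> smooth_on O g ->
  (forall x y z t, O x y z t -> f x y z t = g x y z t) -> pd d f x y z t = pd d g x y z t.
Proof.
  intros Ho HO Hs Hfg. eapply pd_loc; eauto. apply (D_atom O g d x y z t Hs HO).
Qed.

Ltac cont1 Hs HO ds :=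
  let eps := fresh "eps" in let heps := fresh "heps" in
  let e := fresh "e" in let he := fresh "he" in let He := fresh "He" in
  intros eps heps;
  destruct (proj2 (Hs ds _ _ _ _ HO) eps heps) as [e [he He]];
  exists e; split; [exact he|];
  let u := fresh "u" in let v := fresh "v" in
  let hu := fresh "hu" in let hv := fresh "hv" in
  intros u v hu hv;
  assert (forall a, Rabs (a - a) < e) by (let a := fresh "a" in intro a; replace (a - a) with 0 by ring; rewrite Rabs_R0; lra);
  apply He; auto.

Lemma schwarz4 O g d1 d2 x y z t : open4 O -> smooth_on O g -> O x y z t ->
  pd d1 (pd d2 g) x y z t = pd d2 (pd d1 g) x y z t.
Proof.
  intros Ho Hs HO.
  destruct (Ho x y z t HO) as [del [hdel Hdel]].
  assert (h0 : forall a, Rabs (a - a) < del) by (intro a; replace (a - a) with 0 by ring; rewrite Rabs_R0; lra).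
  destruct d1, d2.
  - reflexivity.
  - cbv [pd slice coord]. apply schwarz2 with del; [exact hdel | | cont1 Hs HO (dX::dY::nil) | cont1 Hs HO (dY::dX::nil)].
    intros u v hu hv. assert (HQ : O u v z t) by (apply Hdel; auto).
    refine (conj (proj1 (Hs nil _ _ _ _ HQ) dX) (conj (proj1 (Hs nil _ _ _ _ HQ) dY) (conj (proj1 (Hs (dY::nil) _ _ _ _ HQ) dX) (proj1 (Hs (dX::nil) _ _ _ _ HQ) dY)))).
  - cbv [pd slice coord]. apply schwarz2 with del; [exact hdel | | cont1 Hs HO (dX::dZ::nil) | cont1 Hs HO (dZ::dX::nil)].
    intros u v hu hv. assert (HQ : O u y v t) by (apply Hdel; auto).
    refine (conj (proj1 (Hs nil _ _ _ _ HQ) dX) (conj (proj1 (Hs nil _ _ _ _ HQ) dZ) (conj (proj1 (Hs (dZ::nil) _ _ _ _ HQ) dX) (proj1 (Hs (dX::nil) _ _ _ _ HQ) dZ)))).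
  - cbv [pd slice coord]. apply schwarz2 with del; [exact hdel | | cont1 Hs HO (dX::dT::nil) | cont1 Hs HO (dT::dX::nil)].
    intros u v hu hv. assert (HQ : O u y z v) by (apply Hdel; auto).
    refine (conj (proj1 (Hs nil _ _ _ _ HQ) dX) (conj (proj1 (Hs nil _ _ _ _ HQ) dT) (conj (proj1 (Hs (dT::nil) _ _ _ _ HQ) dX) (proj1 (Hs (dX::nil) _ _ _ _ HQ) dT)))).
  - cbv [pd slice coord]. apply schwarz2 with del; [exact hdel | | cont1 Hs HO (dY::dX::nil) | cont1 Hs HO (dX::dY::nil)].
    intros u v hu hv. assert (HQ : O v u z t) by (apply Hdel; auto).
    refine (conj (proj1 (Hs nil _ _ _ _ HQ) dY) (conj (proj1 (Hs nil _ _ _ _ HQ) dX) (conj (proj1 (Hs (dX::nil) _ _ _ _ HQ) dY) (proj1 (Hs (dY::nil) _ _ _ _ HQ) dX)))).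
  - reflexivity.
  - cbv [pd slice coord]. apply schwarz2 with del; [exact hdel | | cont1 Hs HO (dY::dZ::nil) | cont1 Hs HO (dZ::dY::nil)].
    intros u v hu hv. assert (HQ : O x u v t) by (apply Hdel; auto).
    refine (conj (proj1 (Hs nil _ _ _ _ HQ) dY) (conj (proj1 (Hs nil _ _ _ _ HQ) dZ) (conj (proj1 (Hs (dZ::nil) _ _ _ _ HQ) dY) (proj1 (Hs (dY::nil) _ _ _ _ HQ) dZ)))).
  - cbv [pd slice coord]. apply schwarz2 with del; [exact hdel | | cont1 Hs HO (dY::dT::nil) | cont1 Hs HO (dT::dY::nil)].
    intros u v hu hv. assert (HQ : O x u z v) by (apply Hdel; auto).
    refine (conj (proj1 (Hs nil _ _ _ _ HQ) dY) (conj (proj1 (Hs nil _ _ _ _ HQ) dT) (conj (proj1 (Hs (dT::nil) _ _ _ _ HQ) dY) (proj1 (Hs (dY::nil) _ _ _ _ HQ) dT)))).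
  - cbv [pd slice coord]. apply schwarz2 with del; [exact hdel | | cont1 Hs HO (dZ::dX::nil) | cont1 Hs HO (dX::dZ::nil)].
    intros u v hu hv. assert (HQ : O v y u t) by (apply Hdel; auto).
    refine (conj (proj1 (Hs nil _ _ _ _ HQ) dZ) (conj (proj1 (Hs nil _ _ _ _ HQ) dX) (conj (proj1 (Hs (dX::nil) _ _ _ _ HQ) dZ) (proj1 (Hs (dZ::nil) _ _ _ _ HQ) dX)))).
  - cbv [pd slice coord]. apply schwarz2 with del; [exact hdel | | cont1 Hs HO (dZ::dY::nil) | cont1 Hs HO (dY::dZ::nil)].
    intros u v hu hv. assert (HQ : O x v u t) by (apply Hdel; auto).
    refine (conj (proj1 (Hs nil _ _ _ _ HQ) dZ) (conj (proj1 (Hs nil _ _ _ _ HQ) dY) (conj (proj1 (Hs (dY::nil) _ _ _ _ HQ) dZ) (proj1 (Hs (dZ::nil) _ _ _ _ HQ) dY)))).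
  - reflexivity.
  - cbv [pd slice coord]. apply schwarz2 with del; [exact hdel | | cont1 Hs HO (dZ::dT::nil) | cont1 Hs HO (dT::dZ::nil)].
    intros u v hu hv. assert (HQ : O x y u v) by (apply Hdel; auto).
    refine (conj (proj1 (Hs nil _ _ _ _ HQ) dZ) (conj (proj1 (Hs nil _ _ _ _ HQ) dT) (conj (proj1 (Hs (dT::nil) _ _ _ _ HQ) dZ) (proj1 (Hs (dZ::nil) _ _ _ _ HQ) dT)))).
  - cbv [pd slice coord]. apply schwarz2 with del; [exact hdel | | cont1 Hs HO (dT::dX::nil) | cont1 Hs HO (dX::dT::nil)].
    intros u v hu hv. assert (HQ : O v y z u) by (apply Hdel; auto).
    refine (conj (proj1 (Hs nil _ _ _ _ HQ) dT) (conj (proj1 (Hs nil _ _ _ _ HQ) dX) (conj (proj1 (Hs (dX::nil) _ _ _ _ HQ) dT) (proj1 (Hs (dT::nil) _ _ _ _ HQ) dX)))).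
  - cbv [pd slice coord]. apply schwarz2 with del; [exact hdel | | cont1 Hs HO (dT::dY::nil) | cont1 Hs HO (dY::dT::nil)].
    intros u v hu hv. assert (HQ : O x v z u) by (apply Hdel; auto).
    refine (conj (proj1 (Hs nil _ _ _ _ HQ) dT) (conj (proj1 (Hs nil _ _ _ _ HQ) dY) (conj (proj1 (Hs (dY::nil) _ _ _ _ HQ) dT) (proj1 (Hs (dT::nil) _ _ _ _ HQ) dY)))).
  - cbv [pd slice coord]. apply schwarz2 with del; [exact hdel | | cont1 Hs HO (dT::dZ::nil) | cont1 Hs HO (dZ::dT::nil)].
    intros u v hu hv. assert (HQ : O x y v u) by (apply Hdel; auto).
    refine (conj (proj1 (Hs nil _ _ _ _ HQ) dT) (conj (proj1 (Hs nil _ _ _ _ HQ) dZ) (conj (proj1 (Hs (dZ::nil) _ _ _ _ HQ) dT) (proj1 (Hs (dT::nil) _ _ _ _ HQ) dZ)))).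
  - reflexivity.
Qed.

Ltac nz Hux HO := cbv beta; first [apply Rmult_integral_contrapositive_currified; apply Hux; exact HO |apply pow_nonzero; apply Hux; exact HO | apply Hux; exact HO].
Ltac ds O Hux HO :=
  first [ eapply D_sub; [ds O Hux HO|ds O Hux HO]
        | eapply D_add; [ds O Hux HO|ds O Hux HO]
        | eapply D_mul; [ds O Hux HO|ds O Hux HO]
        | eapply D_div; [ds O Hux HO|ds O Hux HO|nz Hux HO]
        | eapply D_sq; ds O Hux HO
        | eapply (D_atom O); [ repeat apply smooth_pd; assumption | exact HO ] ].

Lemma elim_helper (X L k : R) : L = 0 -> X = X - k * L.
Proof. intros ->; ring. Qed.

Lemma partA (O : R -> R -> R -> R -> Prop) (u U : F4) :
  open4 O ->
  smooth_on O u ->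
  smooth_on O U ->
  (forall x y z t, O x y z t -> pd dX u x y z t <> 0) ->
  (forall x y z t, O x y z t -> ell u U x y z t = 0) ->
  (forall x y z t w, O x y z t -> compat_at u U x y z t w).
Proof.
  intros Ho Hsu HsU Hux Hell x y z t w HO.
  pose proof (Hell x y z t HO) as R1. pose proof (Hux x y z t HO) as Ha.
  unfold ell in R1.
  match type of R1 with pd dZ ?F _ _ _ _ - pd dX ?G _ _ _ _ = _ =>
    erewrite (pd_rw dZ F) in R1 by ds O Hux HO;
    erewrite (pd_rw dX G) in R1 by ds O Hux HO end.
  unfold compat_at, recA, recB, recC, recE.
  match goal with |- pd dX ?F1 _ _ _ _ * _ + _ + pd dX ?F2 _ _ _ _ = pd dZ ?F3 _ _ _ _ * _ + _ + pd dZ ?F4 _ _ _ _ =>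
    erewrite (pd_rw dX F1) by ds O Hux HO;
    erewrite (pd_rw dX F2) by ds O Hux HO;
    erewrite (pd_rw dZ F3) by ds O Hux HO;
    erewrite (pd_rw dZ F4) by ds O Hux HO end.
  cbv beta in *.
  rewrite (schwarz4 O (pd dX u) dX dZ x y z t Ho (smooth_pd _ _ _ Hsu) HO).
  rewrite (elim_helper (pd dZ (pd dY U) x y z t) _ (pd dX u x y z t) R1).
  field. auto.
Qed.

Lemma D_const d c x y z t : Dd d (fun _ _ _ _ => c) x y z t 0.
Proof. unfold Dd; destruct d; simpl; apply derivable_pt_lim_const. Qed.

Lemma partB (O : R -> R -> R -> R -> Prop) (u U : F4) :
  open4 O ->
  smooth_on O u ->
  smooth_on O U ->
  (forall x y z t, O x y z t -> pd dX u x y z t <> 0) ->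
  (forall x y z t, O x y z t -> eq_lhs u x y z t = 0) ->
  (forall x y z t, O x y z t -> ell u U x y z t = 0) ->
  (forall Ut : F4, smooth_on O Ut ->
     (forall x y z t, O x y z t -> rec_rel u U Ut x y z t) ->
     forall x y z t, O x y z t -> ell u Ut x y z t = 0).
Proof.
  intros Ho Hsu HsU Hux Heq Hell Ut HsUt Hrec x y z t HO.
  assert (HZ : forall x y z t, O x y z t -> pd dZ Ut x y z t =
     recA u x y z t * Ut x y z t + recB u U x y z t)
    by (intros a b c e HQ; destruct (Hrec a b c e HQ); lra).
  assert (HX : forall x y z t, O x y z t -> pd dX Ut x y z t =
     recC u x y z t * Ut x y z t + recE u U x y z t)
    by (intros a b c e HQ; destruct (Hrec a b c e HQ); lra).
  pose proof (Hux x y z t HO) as Ha.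
  pose proof (Hell x y z t HO) as R1. unfold ell in R1.
  match type of R1 with pd dZ ?F _ _ _ _ - pd dX ?G _ _ _ _ = _ =>
    erewrite (pd_rw dZ F) in R1 by ds O Hux HO;
    erewrite (pd_rw dX G) in R1 by ds O Hux HO end.
  pose proof (Heq x y z t HO) as R2. unfold eq_lhs in R2.
  match type of R2 with pd dZ ?F _ _ _ _ - pd dX ?G _ _ _ _ = _ =>
    erewrite (pd_rw dZ F) in R2 by ds O Hux HO;
    erewrite (pd_rw dX G) in R2 by ds O Hux HO end.
  set (F2 := fun x y z t =>
     (pd dZ (pd dY u) x y z t * pd dX u x y z t - pd dZ (pd dX u) x y z t * pd dY u x y z t)
       / (pd dX u x y z t * pd dX u x y z t)
   - (pd dX (pd dT u) x y z t * pd dX u x y z t - pd dX (pd dX u) x y z t * pd dT u x y z t)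
       / (pd dX u x y z t * pd dX u x y z t)).
  assert (EF2 : forall x y z t, O x y z t -> eq_lhs u x y z t = F2 x y z t).
  { intros a b c e HQ. unfold eq_lhs.
    match goal with |- pd dZ ?F _ _ _ _ - pd dX ?G _ _ _ _ = _ =>
      erewrite (pd_rw dZ F) by ds O Hux HQ;
      erewrite (pd_rw dX G) by ds O Hux HQ end.
    unfold F2. cbv beta. reflexivity. }
  assert (R3 : pd dX (eq_lhs u) x y z t = 0).
  { apply (pd_loc O _ (fun _ _ _ _ => 0)); auto. apply D_const. }
  erewrite (pd_loc O (eq_lhs u) F2 dX x y z t) in R3; [| exact Ho | exact HO | exact EF2 | unfold F2; ds O Hux HO].
  clear EF2. subst F2.
  unfold ell.
  match goal with |- pd dZ ?F _ _ _ _ - pd dX ?G _ _ _ _ = _ =>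
    erewrite (pd_rw dZ F) by ds O Hux HO;
    erewrite (pd_rw dX G) by ds O Hux HO end.
  cbv beta in *.
  rewrite (schwarz4 O Ut dZ dY x y z t Ho HsUt HO).
  rewrite (schwarz4 O Ut dX dT x y z t Ho HsUt HO).
  erewrite (pd_loc O (pd dZ Ut) _ dY x y z t _ Ho HO HZ) by (unfold recA, recB; ds O Hux HO).
  erewrite (pd_loc O (pd dX Ut) _ dT x y z t _ Ho HO HX) by (unfold recC, recE; ds O Hux HO).
  erewrite (pd_loc O (pd dX Ut) _ dZ x y z t _ Ho HO HX) by (unfold recC, recE; ds O Hux HO).
  erewrite (pd_loc O (pd dX Ut) _ dX x y z t _ Ho HO HX) by (unfold recC, recE; ds O Hux HO).
  cbv beta.
  rewrite (HX x y z t HO), (HZ x y z t HO).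
  unfold recA, recB, recC, recE.
  assert (S1 : forall x y z t, O x y z t -> pd dX (pd dT u) x y z t = pd dT (pd dX u) x y z t)
    by (intros; eapply schwarz4; eauto).
  assert (S2 : forall x y z t, O x y z t -> pd dX (pd dY u) x y z t = pd dY (pd dX u) x y z t)
    by (intros; eapply schwarz4; eauto).
  assert (T1 : pd dX (pd dX (pd dT u)) x y z t = pd dT (pd dX (pd dX u)) x y z t).
  { rewrite (pd_congr O _ _ dX x y z t Ho HO (smooth_pd _ _ _ (smooth_pd _ _ _ Hsu)) S1).
    eapply schwarz4; eauto; apply smooth_pd; auto. }
  assert (T2 : pd dX (pd dZ (pd dY u)) x y z t = pd dY (pd dZ (pd dX u)) x y z t).
  { rewrite (schwarz4 O (pd dY u) dX dZ x y z t Ho (smooth_pd _ _ _ Hsu) HO).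
    rewrite (pd_congr O _ _ dZ x y z t Ho HO (smooth_pd _ _ _ (smooth_pd _ _ _ Hsu)) S2).
    eapply schwarz4; eauto; apply smooth_pd; auto. }
  rewrite T1, T2 in R3.
  rewrite (schwarz4 O (pd dX u) dX dZ x y z t Ho (smooth_pd _ _ _ Hsu) HO) in R3.
  clear T1 T2 S1 S2.
  rewrite (schwarz4 O u dX dT x y z t Ho Hsu HO) in *.
  rewrite (schwarz4 O u dX dY x y z t Ho Hsu HO) in *.
  rewrite (schwarz4 O u dT dY x y z t Ho Hsu HO) in *.
  rewrite (schwarz4 O U dX dY x y z t Ho HsU HO) in *.
  rewrite (schwarz4 O U dT dY x y z t Ho HsU HO) in *.
  rewrite (schwarz4 O U dT dX x y z t Ho HsU HO) in *.
  rewrite (elim_helper (pd dY (pd dZ (pd dX u)) x y z t) _ (pd dX u x y z t) R3).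
  rewrite (elim_helper (pd dZ (pd dY U) x y z t) _ (pd dX u x y z t) R1).
  rewrite (elim_helper (pd dZ (pd dY u) x y z t) _ (pd dX u x y z t) R2).
  field. auto.
Qed.

Theorem mainTheorem1 (O : R -> R -> R -> R -> Prop) (u U : F4) :
  open4 O ->
  smooth_on O u ->
  smooth_on O U ->
  (forall x y z t, O x y z t -> pd dX u x y z t <> 0) ->
  (forall x y z t, O x y z t -> eq_lhs u x y z t = 0) ->
  (forall x y z t, O x y z t -> ell u U x y z t = 0) ->
  (forall x y z t w, O x y z t -> compat_at u U x y z t w) /\
  (forall Ut : F4, smooth_on O Ut ->
     (forall x y z t, O x y z t -> rec_rel u U Ut x y z t) ->
     forall x y z t, O x y z t -> ell u Ut x y z t = 0).
Proof.
  intros Ho Hsu HsU Hux Heq Hell. split.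
  - exact (partA O u U Ho Hsu HsU Hux Hell).
  - exact (partB O u U Ho Hsu HsU Hux Heq Hell).
Qed.
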